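(* Let $G$ be a dense $K_4^3\cup e$-free $3$-graph with $\lambda(G)>\frac{\sqrt3}{18}$. Then $G$ does not contain $K_5^3$ as a subgraph.
   Context: $K_4^3\cup e$ is the $3$-graph on $\{1,\dots,7\}$ with edges $\{123,124,134,234,567\}$. $K_5^3$ is the complete $3$-graph on $5$ vertices. For a $3$-graph $G$ on $[n]$, $\lambda(G)=\max\{\sum_{e\in E(G)}\prod_{i\in e}x_i:\sum_ix_i=1,x_i\ge0\}$. An $r$-graph $G$ is dense if $\lambda(G')<\lambda(G)$ for every proper subgraph $G'$ of $G$. *)

(* Defs.v *)
From mathcomp Require Import all_boot all_order all_algebra.
From mathcomp Require Import all_classical all_reals.
Set Implicit Arguments. Unset Strict Implicit. Unset Printing Implicit Defensive.
Import Order.TTheory GRing.Theory Num.Theory.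
Local Open Scope classical_set_scope.
Local Open Scope ring_scope.

Definition hgraph (n : nat) := {set {set 'I_n}}.

Definition is_3graph (n : nat) (G : hgraph n) : Prop :=
  forall e, e \in G -> #|e| = 3%N.

Definition lagpoly (R : realType) (n : nat) (G : hgraph n) (x : 'I_n -> R) : R :=
  \sum_(e in G) \prod_(i in e) x i.

Definition simplex (R : realType) (n : nat) : set ('I_n -> R) :=
  [set x | (forall i, 0 <= x i) /\ \sum_(i < n) x i = 1].

(* Lagrangian lambda(G) = max over the simplex (the sup is attained by compactness) *)
Arguments lagpoly {R n} G x.
Arguments simplex : clear implicits.
Definition lagrangian (R : realType) (n : nat) (G : hgraph n) : R :=
  sup [set lagpoly G x | x in simplex R n].

Local Close Scope classical_set_scope.

Definition contains (m n : nat) (F : hgraph m) (G : hgraph n) : Prop :=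
  exists f : 'I_m -> 'I_n, injective f /\ forall e, e \in F -> f @: e \in G.

Definition hfree (m n : nat) (F : hgraph m) (G : hgraph n) : Prop :=
  ~ contains F G.

(* K_4^3 u e on {0,...,6}: edges 012, 013, 023, 123, 456 (0-indexed copy of
   123,124,134,234,567). *)
Definition v7 (k : nat) : 'I_7 := inord k.
Definition K43e : hgraph 7 :=
  [set [set v7 0; v7 1; v7 2]; [set v7 0; v7 1; v7 3]; [set v7 0; v7 2; v7 3];
       [set v7 1; v7 2; v7 3]; [set v7 4; v7 5; v7 6]].

Definition K53 : hgraph 5 := [set e : {set 'I_5} | #|e| == 3%N].

(* The Lagrangian of G' on V' equals the
   Lagrangian of the edge set E' viewed on [n] (weights off V' can be taken 0). *)
Arguments lagrangian : clear implicits.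
Definition dense (R : realType) (n : nat) (G : hgraph n) : Prop :=
  forall (V : {set 'I_n}) (E : hgraph n),
    E \subset G -> (forall e, e \in E -> e \subset V) ->
    (V != [set: 'I_n]%SET) || (E != G) ->
    lagrangian R n E < lagrangian R n G.

(* Main.v *)
Require Import Defs.
From mathcomp Require Import all_boot all_order all_algebra.
From mathcomp Require Import all_classical all_reals.
From mathcomp Require Import ring lra zify.
Import Order.TTheory GRing.Theory Num.Theory.
Local Open Scope ring_scope.
Set Implicit Arguments. Unset Strict Implicit.

Lemma poly_bound (R : realType) (a b c d e s e2 e3 : R) :
  0 <= a -> 0 <= b -> 0 <= c -> 0 <= d -> 0 <= e ->
  s = a + b + c + d + e -> s <= 1 ->
  e2 = a*b + a*c + a*d + a*e + b*c + b*d + b*e + c*d + c*e + d*e ->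
  e3 = a*b*c + a*b*d + a*b*e + a*c*d + a*c*e + a*d*e + b*c*d + b*c*e + b*d*e + c*d*e ->
  e3 + e2 * (1 - s) <= 5/54.
Proof.
move=> ha hb hc hd he hsd hs he2 he3.
have H1 : 5 * e3 <= s * e2.
  rewrite -subr_ge0.
  have -> : s * e2 - 5 * e3 = (a*((b-c)^+2+(b-d)^+2+(b-e)^+2+(c-d)^+2+(c-e)^+2+(d-e)^+2)
     + b*((a-c)^+2+(a-d)^+2+(a-e)^+2+(c-d)^+2+(c-e)^+2+(d-e)^+2)
     + c*((a-b)^+2+(a-d)^+2+(a-e)^+2+(b-d)^+2+(b-e)^+2+(d-e)^+2)
     + d*((a-b)^+2+(a-c)^+2+(a-e)^+2+(b-c)^+2+(b-e)^+2+(c-e)^+2)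
     + e*((a-b)^+2+(a-c)^+2+(a-d)^+2+(b-c)^+2+(b-d)^+2+(c-d)^+2)) / 3
     by rewrite hsd he2 he3; field.
  apply: divr_ge0; last by [].
  by rewrite !addr_ge0 // mulr_ge0 // !addr_ge0 // sqr_ge0.
have H2 : 5 * e2 <= 2 * s ^+ 2.
  rewrite -subr_ge0.
  have -> : 2 * s ^+ 2 - 5 * e2 = ((a-b)^+2+(a-c)^+2+(a-d)^+2+(a-e)^+2+(b-c)^+2+(b-d)^+2+(b-e)^+2+(c-d)^+2+(c-e)^+2+(d-e)^+2) / 2
     by rewrite hsd he2; field.
  apply: divr_ge0; last by [].
  by rewrite !addr_ge0 // sqr_ge0.
have s0 : 0 <= s by rewrite hsd !addr_ge0.
have e20 : 0 <= e2 by rewrite he2 !addr_ge0 // mulr_ge0.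
have H3 : 0 <= (s - 5/6)^+2 * (s + 5/12) by rewrite mulr_ge0 ?sqr_ge0 //; lra.
have H4 : 0 <= e2 * (1 - s) by rewrite mulr_ge0 //; lra.
nra.
Qed.

Lemma final_bound (R : realType) (a : 'I_5 -> R) :
  (forall k, 0 <= a k) -> \sum_(k < 5) a k <= 1 ->
  \sum_(p < 5) \sum_(q < 5 | (p < q)%N) a p * a q * (1 - \sum_(r < 5 | (r <= q)%N) a r) <= 5/54.
Proof.
move=> h0 hs.
rewrite (eq_bigr (fun p : 'I_5 => \sum_(q < 5) (if (p < q)%N then a p * a q * (1 - \sum_(r < 5) (if (r <= q)%N then a r else 0)) else 0))); last first.
  by move=> p _; rewrite big_mkcond; apply: eq_bigr => q _; rewrite big_mkcond.
rewrite !big_ord_recl !big_ord0 /= in hs *.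
set a0 := a ord0.
set a4 := a (lift ord0 (lift ord0 (lift ord0 (lift ord0 ord0)))).
set a3 := a (lift ord0 (lift ord0 (lift ord0 ord0))).
set a2 := a (lift ord0 (lift ord0 ord0)).
set a1 := a (lift ord0 ord0).
have hs' : a0 + a1 + a2 + a3 + a4 <= 1 by move: hs; rewrite !addr0 !addrA.
have H := @poly_bound R a0 a1 a2 a3 a4 _ _ _ (h0 _) (h0 _) (h0 _) (h0 _) (h0 _) (erefl _) hs' (erefl _) (erefl _).
apply: le_trans H; rewrite le_eqVlt; apply/orP; left; apply/eqP.
rewrite /a0 /a1 /a2 /a3 /a4; ring.
Qed.

Lemma two_in (n : nat) (G : hgraph n) (f : 'I_5 -> 'I_n) :
  injective f -> (forall E, E \in K53 -> f @: E \in G) -> hfree K43e G ->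
  forall e, e \in G -> #|e| = 3%N -> (1 < #|[set k | f k \in e]|)%N.
Proof.
move=> finj hf hfr e eG ce.
rewrite ltnNge; apply/negP => hP.
set Q := [set k | f k \notin e].
have cQ : (4 <= #|Q|)%N.
  have := cardsC [set k | f k \in e]; rewrite card_ord.
  have -> : ~: [set k | f k \in e] = Q by apply/setP => k; rewrite !inE.
  move: hP; lia.
have uQ := enum_uniq (pred_of_set Q).
have sQ : (4 <= size (enum Q))%N by rewrite -cardE.
case EQ : (enum Q) sQ uQ => [|k0 [|k1 [|k2 [|k3 rest]]]] // _ uQ.
have kQ : forall k, k \in [:: k0; k1; k2; k3] -> f k \notin e.
  move=> k hk; have : k \in enum Q.
   by rewrite EQ; move: hk; rewrite !inE => /or4P [] /eqP ->; rewrite eqxx ?orbT.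
  by rewrite mem_enum inE.
have uks : uniq [:: k0; k1; k2; k3] 
  by move: uQ; rewrite -[[:: k0, k1, k2, k3 & rest]]/([:: k0; k1; k2; k3] ++ rest) cat_uniq => /andP[].
have se : size (enum e) = 3%N by rewrite -cardE.
have ue := enum_uniq (pred_of_set e).
case EE : (enum e) se ue => [|u1 [|u2 [|u3 [|? ?]]]] // _ ue.
have Ee : e = [set u1; u2; u3].
    apply/setP => z; rewrite -mem_enum EE !inE orbA //.
set L := [:: f k0; f k1; f k2; f k3; u1; u2; u3].
have uL : uniq L.
  rewrite -[L]/(map f [:: k0; k1; k2; k3] ++ [:: u1; u2; u3]) cat_uniq.
  rewrite (map_inj_uniq finj) uks ue /=.
  have hne : forall u k, u \in [:: u1; u2; u3] -> k \in [:: k0; k1; k2; k3] -> (u == f k) = false.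
    move=> u k; rewrite -EE mem_enum => ue' hk; apply/negP => /eqP eqk; move: (kQ k hk); rewrite -eqk ue' //.
  rewrite !negb_or !hne //.
  all: try by rewrite ?inE ?eqxx ?orbT.
apply hfr; exists (fun i : 'I_7 => nth u1 L i); split.
  move=> i j /eqP; rewrite nth_uniq // => /eqP; exact: val_inj.
have gv : forall a, (a < 7)%N -> nth u1 L (v7 a) = nth u1 L a by move=> a ha; rewrite /v7 inordK.
have hk3 : forall x y z, x \in [:: k0; k1; k2; k3] -> y \in [:: k0; k1; k2; k3] -> z \in [:: k0; k1; k2; k3] ->
   x != y -> x != z -> y != z -> [set f x; f y; f z] \in G.
  move=> x y z _ _ _ xy xz yz.
  have -> : [set f x; f y; f z] = f @: [set x; y; z] by rewrite ?imsetU1 ?imsetU !imset_set1.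
  apply: hf; rewrite inE -finset.setUA !cardsU1 cards1 !inE (negbTE xy) (negbTE xz) (negbTE yz) //.
move: uks; rewrite /= !inE !negb_or => /andP[/and3P[h01 h02 h03]] /andP[/andP[h12 h13]] /andP[h23 _].
move=> E; rewrite /K43e !inE => /orP[/orP[/orP[/orP[/eqP->|/eqP->]|/eqP->]|/eqP->]|/eqP->];
  rewrite ?imsetU1 ?imsetU !imset_set1 !gv //=.
- by apply: hk3; rewrite ?inE ?eqxx ?orbT.
- by apply: hk3; rewrite ?inE ?eqxx ?orbT.
- by apply: hk3; rewrite ?inE ?eqxx ?orbT.
- by apply: hk3; rewrite ?inE ?eqxx ?orbT.
by rewrite -Ee.
Qed.

Definition Dp (n : nat) (f : 'I_5 -> 'I_n) (t : 'I_5 * 'I_5 * 'I_n) : bool :=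
  (t.1.1 < t.1.2)%N && (t.2 \notin f @: [set r : 'I_5 | (r <= t.1.2)%N]).
Definition psi (n : nat) (f : 'I_5 -> 'I_n) (t : 'I_5 * 'I_5 * 'I_n) : {set 'I_n} :=
  f t.1.1 |: (f t.1.2 |: [set t.2]).

Lemma cover3 (n : nat) (G : hgraph n) (f : 'I_5 -> 'I_n) :
  injective f -> is_3graph G ->
  (forall e, e \in G -> (1 < #|[set k | f k \in e]|)%N) ->
  forall e, e \in G -> exists2 t, Dp f t & e = psi f t.
Proof.
move=> finj h3 two e eG.
have c2 := two e eG.
set P := [set k | f k \in e] in c2 *.
have [k0 k0P] : exists k0, k0 \in P.
  by apply/set0Pn; rewrite -card_gt0; lia.
case: (arg_minnP (fun k : 'I_5 => nat_of_ord k) k0P) => p pP0 pmin.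
have pP : p \in P := pP0.
have [k1 k1P] : exists k1, k1 \in P :\ p.
  by apply/set0Pn; rewrite -card_gt0; move: c2; rewrite (cardsD1 p P) pP; lia.
case: (arg_minnP (fun k : 'I_5 => nat_of_ord k) k1P) => q qP0 qmin.
have qP : q \in P :\ p := qP0.
have fpe : f p \in e by move: pP; rewrite inE.
have qne : q != p by move: qP; rewrite !inE => /andP[].
have fqe : f q \in e :\ f p.
  move: qP; rewrite !inE => /andP[_ ->]; rewrite andbT.
  by apply: contra qne => /eqP /finj ->.
have c1 : #|e :\ f p :\ f q| == 1%N.
  have := h3 e eG; rewrite (cardsD1 (f p)) fpe (cardsD1 (f q) (e :\ f p)) fqe.
  by change (nat_of_bool true) with 1%N; rewrite !add1n => -[->].
case/cards1P: c1 => u Eu.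
have pq : (p < q)%N.
  have := pmin q (setD1P qP).2.
  by rewrite leq_eqVlt => /orP[/eqP/val_inj Hpq|//]; move: qne; rewrite Hpq eqxx.
exists (p, q, u); last first.
  by rewrite /psi /= -Eu finset.setD1K // finset.setD1K.
rewrite /Dp pq /=.
apply/imsetP => -[r]; rewrite inE => rq ur.
have ue : u \in e :\ f p :\ f q by rewrite Eu set11.
move: ue; rewrite !inE ur => /and3P[rq' rp re].
have rP : r \in P :\ p.
  rewrite !inE re andbT; apply: contra rp => /eqP ->; exact: eqxx.
have := qmin r rP.
move=> qr.
have : nat_of_ord r = q by apply/eqP; rewrite eqn_leq rq qr.
by move/val_inj => Hr; move: rq'; rewrite Hr eqxx.
Qed.

Lemma sum_sub (R : realType) (T : finType) (A B : {set T}) (F : T -> R) :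
  A \subset B -> (forall e, e \in B -> 0 <= F e) ->
  \sum_(e in A) F e <= \sum_(e in B) F e.
Proof.
move=> AB F0; rewrite [X in _ <= X](big_setID A) /=.
have -> : B :&: A = A by exact/finset.setIidPr.
rewrite lerDl; apply: sumr_ge0 => i /finset.setDP [iB _]; exact: F0.
Qed.

Lemma lag_bound (R : realType) (n : nat) (G : hgraph n) (f : 'I_5 -> 'I_n) :
  injective f -> is_3graph G ->
  (forall e, e \in G -> (1 < #|[set k | f k \in e]|)%N) ->
  forall x, simplex R n x -> lagpoly G x <= 5/54.
Proof.
move=> finj h3 two x [x0 x1].
pose F := fun e : {set 'I_n} => \prod_(i in e) x i.
have F0 : forall e, 0 <= F e by move=> e; apply: prodr_ge0 => i _; exact: x0.
pose D := [set t | Dp f t].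
have S1 : lagpoly G x <= \sum_(e in psi f @: D) F e.
  rewrite /lagpoly; apply: (sum_sub (F := F)) => //; apply/fintype.subsetP => e eG.
  have [t tD ->] := cover3 finj h3 two eG.
  by apply/imsetP; exists t; rewrite ?inE.
have S2 : \sum_(e in psi f @: D) F e <= \sum_(t in D) F (psi f t).
  rewrite (partition_big_imset (psi f) D (fun t => F (psi f t))) /=.
  apply: ler_sum => e /imsetP [t tD ->].
  rewrite (bigD1 t) /=; last by rewrite tD eqxx.
  by rewrite lerDl sumr_ge0.
have Su : forall q : 'I_5, \sum_(u | u \notin f @: [set r : 'I_5 | (r <= q)%N]) x u
    = 1 - \sum_(r < 5 | (r <= q)%N) x (f r).
  move=> q; set A := f @: [set r : 'I_5 | (r <= q)%N].
  have E1 : \sum_(i in A) x i = \sum_(r < 5 | (r <= q)%N) x (f r).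
    rewrite big_imset /=; last by move=> ? ? _ _; exact: finj.
    by apply: eq_bigl => r; rewrite inE.
  rewrite -x1 (bigID (mem A) predT) /= -E1.
  ring.
have S3 : \sum_(t in D) F (psi f t) =
   \sum_(pq : 'I_5 * 'I_5 | (pq.1 < pq.2)%N)
     \sum_(u | u \notin f @: [set r : 'I_5 | (r <= pq.2)%N]) x (f pq.1) * x (f pq.2) * x u.
  rewrite pair_big_dep /=.
  apply: eq_big => [[[p q] u]|[[p q] u]]; first by rewrite inE.
  rewrite inE /Dp /= => /andP[pq uA].
  have fpq : f p != f q.
    apply/eqP => /finj Hpq; move: pq; rewrite Hpq ltnn //.
  have up : f p != u.
    move: (uA); apply: contra => /eqP <-; apply/imsetP; exists p => //; rewrite inE ltnW //.
  have uq : f q != u.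
    move: (uA); apply: contra => /eqP <-; apply/imsetP; exists q => //; rewrite inE leqnn //.
  rewrite /F /psi /= big_setU1 /=; last by rewrite !inE negb_or fpq.
  rewrite big_setU1 /=; last by rewrite !inE.
  by rewrite big_set1 mulrA.
have S4 : \sum_(pq : 'I_5 * 'I_5 | (pq.1 < pq.2)%N)
     \sum_(u | u \notin f @: [set r : 'I_5 | (r <= pq.2)%N]) x (f pq.1) * x (f pq.2) * x u
   = \sum_(p < 5) \sum_(q < 5 | (p < q)%N) x (f p) * x (f q) * (1 - \sum_(r < 5 | (r <= q)%N) x (f r)).
  rewrite [RHS]pair_big_dep /=.
  apply: eq_big => -[p q] // _ /=.
  by rewrite -big_distrr /= Su.
have hs : \sum_(k < 5) x (f k) <= 1.
  rewrite -x1.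
  have -> : \sum_(k < 5) x (f k) = \sum_(i in f @: [set: 'I_5]) x i.
    rewrite big_imset /=; last by move=> ? ? _ _; exact: finj.
    by apply: eq_bigl => r; rewrite inE.
  have -> : \sum_(i < n) x i = \sum_(i in [set: 'I_n]) x i.
    by apply: eq_bigl => r; rewrite inE.
  apply: sum_sub; first exact: finset.subsetT.
  by move=> *; exact: x0.
apply: le_trans S1 _; apply: le_trans S2 _; rewrite S3 S4.
exact: final_bound.
Qed.

Unset Implicit Arguments.

Theorem claim5p2 (R : realType) (n : nat) (G : hgraph n) :
  is_3graph G -> dense R G -> hfree K43e G ->
  Num.sqrt 3 / 18 < lagrangian R n G ->
  ~ contains K53 G.
Proof.
move=> h3 _ hfr hlt [f [finj hf]].
have two : forall e, e \in G -> (1 < #|[set k | f k \in e]|)%N.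
  by move=> e eG; apply: (two_in finj hf hfr eG (h3 e eG)).
have Hub : lagrangian R n G <= 5/54.
  rewrite /lagrangian.
  case: (pselect ([set lagpoly G x | x in simplex R n] !=set0)%classic) => [ne|e0].
    apply: ge_sup => // _ [x xs <-]; exact: (lag_bound finj h3 two xs).
  have -> : ([set lagpoly G x | x in simplex R n] = set0)%classic.
    by apply/seteqP; split => // y Hy; apply: e0; exists y.
  rewrite sup0; lra.
have s0 : 0 <= Num.sqrt (3 : R) by exact: sqrtr_ge0.
have s2 : Num.sqrt (3 : R) ^+ 2 = 3 by rewrite sqr_sqrtr.
have : 5/54 < Num.sqrt (3 : R) / 18 by nra.
lra.
Qed.
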